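(* Let $\mathbf X=\{X_i\}_{i\in\mathbb Z}$ be a stationary strongly mixing process on a finite alphabet with $0<\mathcal H_1(\mathbf X)<\infty$, whose strong mixing coefficients satisfy $\sum_{s=0}^\infty d(s)<\infty$, and which is aperiodic in the sense that $\mathcal R(\mathbf X):=\sup_{s\in\mathbb N_+}\mathbb P[X_1=X_{1+s}]<1$. Let $\beta>0$, $\ell=\beta\log n$, and $\eta>0$. Then \[ \sup_{1\le s\le\ell}\ \max_{\frac{1+\eta}{\mathcal H_1(\mathbf X)}\log n\le t\le\beta\log n}\mathbb P\!\left[X_1^t=X_{1+s}^{t+s}\right]=o\!\left(\frac1{\log n}\right)\quad(n\to\infty), \] with constants depending on $p_{\min}:=\min_{x\in\mathrm{supp}(P_{X_1})}P_{X_1}(x)$.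
   Context: Logarithms are to base $|\mathcal X|$. Strong mixing coefficient: $d(s):=\sup\{|\mathbb P[\mathcal F\mid\mathcal E]-\mathbb P[\mathcal F]|: i\in\mathbb Z,\ \mathcal E\in\sigma(X_{-\infty}^i),\ \mathcal F\in\sigma(X_{i+s}^\infty)\}$, taken w.l.o.g. non-increasing in $s$; $\mathbf X$ is strongly mixing if $d(s)\to0$. $\mathcal H_1(\mathbf X)=\lim_{t\to\infty}\frac{1}{2t+1}H_1(P_{X_{-t}^t})$ is the Shannon entropy rate (assumed to exist). $X_1^t=X_{1+s}^{t+s}$ means $X_i=X_{i+s}$ for all $i\in[t]$. *)

(* Defs.v *)
From HB Require Import structures.
From mathcomp Require Import all_boot all_order all_algebra.
From mathcomp Require Import all_classical all_reals all_analysis.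
Set Implicit Arguments. Unset Strict Implicit. Unset Printing Implicit Defensive.
Import Order.TTheory GRing.Theory Num.Theory numFieldNormedType.Exports.
Local Open Scope classical_set_scope.
Local Open Scope ring_scope.

Section ProcessDefs.
Context {R : realType} {d : measure_display} {Omega : measurableType d}
  (P : probability Omega R) {A : finType} (X : int -> Omega -> A).

Definition prb (E : set Omega) : R := fine (P E).

Definition logA (x : R) : R := ln x / ln (#|A|%:R).

(* each X_i is a random variable (A finite, discrete sigma-algebra) *)
Definition process_measurable : Prop :=
  forall (i : int) (a : A), measurable (X i @^-1` [set a]).

Definition stationary : Prop :=
  forall (m : int) (s : seq (int * A)),
    P [set w | all (fun p => X (p.1 + m) w == p.2) s] =
    P [set w | all (fun p => X p.1 w == p.2) s].

(* generators of sigma(X_{-oo}^i) and sigma(X_j^{oo}) *)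
Definition past_gen (i : int) : set (set Omega) :=
  [set E | exists j a, j <= i /\ E = X j @^-1` [set a]].
Definition future_gen (i : int) : set (set Omega) :=
  [set E | exists j a, i <= j /\ E = X j @^-1` [set a]].

(* strong mixing coefficient d(s); P[F | E] = P[F & E]/P[E], over P[E] > 0 *)
Definition mixing_coef (s : nat) : \bar R :=
  ereal_sup [set v : \bar R | exists (i : int) (E F : set Omega),
    [/\ <<s past_gen i >> E, <<s future_gen (i + s%:Z) >> F, 0 < prb E &
         v = (`| prb (F `&` E) / prb E - prb F |)%:E ] ].

(* block entropy H_1(P_{X_{-t}^t}), base |A|, as a sum over (2t+1)-tuples *)
Definition block_prob (t : nat) (a : (2 * t).+1.-tuple A) : R :=
  prb [set w | forall k : 'I_(2 * t).+1, X (k%:Z - t%:Z) w = tnth a k].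
Definition block_entropy (t : nat) : R :=
  - \sum_(a : (2 * t).+1.-tuple A) block_prob a * logA (block_prob a).

Definition recurrence_R : \bar R :=
  ereal_sup [set (prb [set w | X 1 w = X (1 + s%:Z) w])%:E
            | s in [set s : nat | (0 < s)%N]].

Definition match_prob (s t : nat) : R :=
  prb [set w | forall i : nat, (1 <= i <= t)%N -> X i%:Z w = X (i + s)%:Z w].

(* sup_{1<=s<=beta log n} max_{(1+eta)/h log n <= t <= beta log n} P[...]
   (0 when the index range is empty; all terms are >= 0) *)
Definition max_match_prob (h beta eta : R) (n : nat) : R :=
  sup ([set 0] `|` [set v | exists s t : nat,
         [/\ (1 <= s)%N, s%:R <= beta * logA n%:R,
             (1 + eta) / h * logA n%:R <= t%:R, t%:R <= beta * logA n%:R &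
             v = match_prob s t]]).

End ProcessDefs.

(* Main.v *)
Require Import Defs.
From HB Require Import structures.
From mathcomp Require Import all_boot all_order all_algebra.
From mathcomp Require Import all_classical all_reals all_analysis.
From mathcomp Require Import ring lra zify.
Import Order.TTheory GRing.Theory Num.Theory numFieldNormedType.Exports.
Local Open Scope classical_set_scope.
Local Open Scope ring_scope.
Set Implicit Arguments. Unset Strict Implicit. Unset Printing Implicit Defensive.


Lemma in_bigsetU_ord (T : Type) n (F : 'I_n -> set T) w :
  (\big[setU/set0]_(k < n) F k) w <-> exists k, F k w.
Proof.
split.
  elim/big_ind: _ => //; first by move=> x y Hx Hy [/Hx|/Hy].
  by move=> k _ Hk; exists k.
by case=> k Hk; rewrite (bigD1 k) //=; left.
Qed.

Section Basic.
Variables (R : realType) (d : measure_display) (Omega : measurableType d)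
  (P : probability Omega R) (A : finType) (X : int -> Omega -> A).
Hypothesis Xm : process_measurable X.
Hypothesis Xst : stationary P X.

Definition cyl (l : seq (int * A)) : set Omega :=
  [set w | all (fun p => X p.1 w == p.2) l].

Lemma cyl_cons p l : cyl (p :: l) = X p.1 @^-1` [set p.2] `&` cyl l.
Proof. apply/seteqP; split => w; rewrite /cyl /=; first by case/andP => /eqP. by case=> -> ->; rewrite eqxx. Qed.

Lemma cyl_nil : cyl [::] = setT.
Proof. by apply/seteqP; split. Qed.

Lemma cyl_meas l : measurable (cyl l).
Proof.
elim: l => [|p l IH]; first by rewrite cyl_nil.
by rewrite cyl_cons; apply: measurableI => //; apply: Xm.
Qed.

Lemma cyl_gen (G : set (set Omega)) l :
  (forall p, p \in l -> G (X p.1 @^-1` [set p.2])) -> <<s G >> (cyl l).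
Proof.
elim: l => [|p l IH] Hl.
  by rewrite cyl_nil; exact: (@measurableT _ (g_sigma_algebraType G)).
rewrite cyl_cons; apply: (@measurableI _ (g_sigma_algebraType G)).
  by apply: sub_gen_smallest; apply: Hl; rewrite mem_head.
by apply: IH => q ql; apply: Hl; rewrite in_cons ql orbT.
Qed.

Lemma cyl_shift m l :
  P (cyl [seq (p.1 + m, p.2) | p <- l]) = P (cyl l).
Proof.
rewrite -(Xst m l); congr (P _); apply/seteqP; split => w;
by rewrite /cyl /= all_map.
Qed.

Lemma prbE (E : set Omega) : measurable E -> P E = (prb P E)%:E.
Proof.
move=> mE; rewrite /prb fineK // ge0_fin_numE //.
exact: (le_lt_trans (probability_le1 P mE) (ltry _)).
Qed.

Lemma prb_ge0 E : 0 <= prb P E.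
Proof. by rewrite /prb fine_ge0. Qed.

Lemma prb_le1 E : measurable E -> prb P E <= 1.
Proof. by move=> mE; rewrite -lee_fin -prbE //; apply: probability_le1. Qed.

Lemma prb_le E F : measurable E -> measurable F -> E `<=` F -> prb P E <= prb P F.
Proof. by move=> mE mF EF; rewrite -lee_fin -!prbE //; apply: le_measure => //; rewrite inE. Qed.

Lemma prb_point j a : prb P (X j @^-1` [set a]) = prb P (X 1 @^-1` [set a]).
Proof.
have := cyl_shift (j - 1) [:: (1, a)].
rewrite /= /cyl /= => H.
rewrite /prb; congr fine.
have -> : X j @^-1` [set a] = [set w | (X (1 + (j - 1)) w == a) && true].
  by apply/seteqP; split => w /=; rewrite andbT addrC subrK; [move=>->|move/eqP].
rewrite H; congr (P _); apply/seteqP; split => w /=; rewrite andbT; [move/eqP|move=>->]=> //.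
Qed.

Lemma meas_eq i j : measurable [set w | X i w = X j w].
Proof.
have -> : [set w | X i w = X j w] =
  \big[setU/set0]_(k < #|A|) (X i @^-1` [set enum_val k] `&` X j @^-1` [set enum_val k]).
  apply/seteqP; split => w /=.
    move=> Hw; apply/in_bigsetU_ord; exists (enum_rank (X i w)).
    by rewrite /= enum_rankK Hw.
  by move/in_bigsetU_ord => -[k [/= -> ->]].
by apply: bigsetU_measurable => k _; apply: measurableI; apply: Xm.
Qed.


Lemma prbT : prb P setT = 1.
Proof. by rewrite /prb probability_setT. Qed.

Hypothesis Hsum : ((\sum_(0 <= s <oo) mixing_coef P X s) < +oo)%E.

Lemma mix_ge0 s : (0 <= mixing_coef P X s)%E.
Proof.
apply: ereal_sup_ubound; exists 0, setT, setT; split.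
- exact: (@measurableT _ (g_sigma_algebraType (past_gen X 0))).
- exact: (@measurableT _ (g_sigma_algebraType (future_gen X (0 + s%:Z)))).
- by rewrite prbT.
- by rewrite setIT prbT divr1 subrr normr0.
Qed.

Lemma mix_fin s : (mixing_coef P X s < +oo)%E.
Proof.
apply: le_lt_trans Hsum.
apply: le_trans (@nneseries_lim_ge _ _ xpredT 0 s.+1 (fun n _ _ => mix_ge0 n)).
rewrite big_nat_recr //= leeDr //; apply: sume_ge0 => n _; exact: mix_ge0.
Qed.

Definition D s := fine (mixing_coef P X s).

Lemma mixE s : mixing_coef P X s = (D s)%:E.
Proof. by rewrite /D fineK // ge0_fin_numE ?mix_ge0 ?mix_fin. Qed.

Lemma D_ge0 s : 0 <= D s.
Proof. by rewrite -lee_fin -mixE mix_ge0. Qed.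

Lemma D_mono s s' : (s <= s')%N -> D s' <= D s.
Proof.
move=> ss'; rewrite -lee_fin -!mixE; apply: ereal_sup_le => v [i [E [F [HE HF HP ->]]]].
exists i, E, F; split => //.
apply: (smallest_sub (@smallest_sigma_algebra _ setT _)) HF.
move=> G [j [a [ij ->]]]; apply: sub_gen_smallest; exists j, a; split => //.
apply: le_trans ij; rewrite lerD2l lez_nat //.
Qed.

Lemma mixing_bound i s E F : measurable E -> measurable F ->
  <<s past_gen X i >> E -> <<s future_gen X (i + s%:Z) >> F ->
  prb P (F `&` E) <= prb P E * (prb P F + D s).
Proof.
move=> mE mF HE HF.
have HFE : prb P (F `&` E) <= prb P E.
  by apply: prb_le; [exact: measurableI|exact: mE|exact: subIsetr].
have [E0|Epos] := eqVneq (prb P E) 0.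
  by rewrite E0 mul0r; move: HFE; rewrite E0.
have Epos' : 0 < prb P E by rewrite lt_neqAle eq_sym Epos prb_ge0.
have H : ((`|prb P (F `&` E) / prb P E - prb P F|)%:E <= mixing_coef P X s)%E.
  by apply: ereal_sup_ubound; exists i, E, F; split.
rewrite mixE lee_fin in H.
have H2 : prb P (F `&` E) / prb P E <= prb P F + D s.
  by rewrite -lerBlDl (le_trans (ler_norm _)) .
rewrite -[X in X <= _](divfK Epos) mulrC ler_pM2l //.
Qed.

End Basic.


Lemma zip_mem1 (T1 T2 : eqType) (s : seq T1) (t : seq T2) p :
  p \in zip s t -> p.1 \in s.
Proof.
elim: s t => [|x s IH] [|y t] //=; rewrite in_cons => /orP[/eqP->|/IH H].
  by rewrite eqxx.
by rewrite H orbT.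
Qed.

Fixpoint sparseI (g : nat) (I : seq int) : bool :=
  if I is j :: I' then all (fun k => k + g%:Z <= j) I' && sparseI g I' else true.

Section Points.
Variables (R : realType) (d : measure_display) (Omega : measurableType d)
  (P : probability Omega R) (A : finType) (X : int -> Omega -> A).
Hypothesis Xm : process_measurable X.
Hypothesis Xst : stationary P X.
Hypothesis Hsum : ((\sum_(0 <= s <oo) mixing_coef P X s) < +oo)%E.
Variable p0 : R.
Hypothesis Hp0 : forall a, prb P (X 1 @^-1` [set a]) <= p0.

Lemma points g (I : seq int) (a : seq A) : sparseI g I -> size a = size I ->
  prb P (cyl X (zip I a)) <= (p0 + D P X g) ^+ size I.
Proof.
elim: I a => [|j I IH] [|b a] //=.
  by move=> _ _; rewrite cyl_nil prbT.
move=> /andP[Hj Hs] [Hsz].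
rewrite cyl_cons /= exprSr.
have mE := cyl_meas Xm (zip I a).
apply: le_trans (mixing_bound Hsum (i := j - g%:Z) (s := g) mE (Xm j b) _ _) _.
- apply: cyl_gen => p /zip_mem1 pI; exists p.1, p.2; split => //.
  by rewrite lerBrDr; move/allP: Hj; apply.
- by apply: sub_gen_smallest; exists j, b; split => //; rewrite subrK.
- apply: ler_pM; [exact: prb_ge0| |exact: IH|].
  + by apply: addr_ge0; [exact: prb_ge0|exact: D_ge0].
  + by rewrite lerD2r prb_point.
Qed.

End Points.


Lemma zip_mapl (T1 T2 : Type) (f : T1 -> T1) (s : seq T1) (t : seq T2) :
  zip (map f s) t = map (fun p => (f p.1, p.2)) (zip s t).
Proof. by elim: s t => [|x s IH] [|y t] //=; rewrite IH. Qed.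

Section Coll.
Variables (R : realType) (d : measure_display) (Omega : measurableType d)
  (P : probability Omega R) (A : finType) (X : int -> Omega -> A).
Hypothesis Xm : process_measurable X.
Hypothesis Xst : stationary P X.
Hypothesis Hsum : ((\sum_(0 <= s <oo) mixing_coef P X s) < +oo)%E.

Lemma prb_bigU n (H : 'I_n -> set Omega) : (forall k, measurable (H k)) ->
  trivIset setT H ->
  prb P (\big[setU/set0]_(k < n) H k) = \sum_(k < n) prb P (H k).
Proof.
move=> mH tH; apply: EFin_inj.
rewrite -prbE; last by apply: bigsetU_measurable => k _; exact: mH.
rewrite measure_bigsetU_ord // -sumEFin; apply: eq_bigr => k _; exact: prbE.
Qed.

Lemma cyl_zip_self w (I : seq int) :
  cyl X (zip I [seq X j w | j <- I]) w.
Proof. by elim: I => [|j I IH] //=; rewrite /cyl /= eqxx. Qed.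

Lemma cyl_zip_val w (I : seq int) (a : seq A) : size a = size I ->
  cyl X (zip I a) w -> a = [seq X j w | j <- I].
Proof.
elim: I a => [|j I IH] [|b a] //= [Hs] /andP[/eqP -> H].
by rewrite (IH a Hs H).
Qed.

Lemma cyl_zip_shift w (J : seq int) (r : int) :
  (forall j, j \in J -> X j w = X (j + r) w) ->
  cyl X (zip [seq j + r | j <- J] [seq X j w | j <- J]) w.
Proof.
rewrite /cyl /=; elim: J => [|j J IH] Hw //=.
rewrite -Hw ?mem_head // eqxx /=; apply: IH => j' Hj'; apply: Hw.
by rewrite in_cons Hj' orbT.
Qed.

Variables (I : seq int) (r i0 : int) (G : nat) (Bmax : R).
Hypothesis HI : forall j, j \in I -> j <= i0 /\ i0 + G%:Z <= j + r.
Hypothesis HB : forall a : seq A, size a = size I -> prb P (cyl X (zip I a)) <= Bmax.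
Hypothesis HB0 : 0 <= Bmax.

Definition Mset := [set w | forall j, j \in I -> X j w = X (j + r) w].

Lemma collision : measurable Mset -> prb P Mset <= Bmax + D P X G.
Proof.
move=> mM.
pose T := (size I).-tuple A.
pose a (k : 'I_#|{: T}|) : T := enum_val k.
pose E k := cyl X (zip I (a k)).
pose F k := cyl X (zip [seq j + r | j <- I] (a k)).
have sza k : size (a k) = size I by rewrite size_tuple.
have mE k : measurable (E k) by exact: cyl_meas.
have mF k : measurable (F k) by exact: cyl_meas.
have tE : trivIset setT E.
  move=> k k' _ _ [w [H1 H2]].
  apply: enum_val_inj; apply: val_inj.
  exact: (etrans (cyl_zip_val (sza k) H1) (esym (cyl_zip_val (sza k') H2))).
have tFE : trivIset setT (fun k => F k `&` E k).
  by move=> k k' _ _ [w [[_ H1] [_ H2]]]; apply: tE => //; exists w.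
have sub : Mset `<=` \big[setU/set0]_(k < #|{: T}|) (F k `&` E k).
  move=> w Hw; apply/in_bigsetU_ord.
  exists (enum_rank (map_tuple (fun j => X j w) (in_tuple I))).
  rewrite /F /E /a enum_rankK /=; split; last exact: cyl_zip_self.
  exact: cyl_zip_shift.
apply: le_trans (prb_le P mM _ sub) _.
  by apply: bigsetU_measurable => k _; exact: measurableI.
rewrite prb_bigU //; last by move=> k; exact: measurableI.
have Hk k : prb P (F k `&` E k) <= prb P (E k) * (prb P (F k) + D P X G).
  apply: (mixing_bound Hsum (i := i0) (s := G) (mE k) (mF k)).
  - apply: cyl_gen => p /zip_mem1 pI; exists p.1, p.2; split => //.
    by have [] := HI pI.
  - apply: cyl_gen => p /zip_mem1 /mapP [j jI ->]; exists (j + r), p.2; split => //.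
    by have [] := HI jI.
apply: le_trans (ler_sum _ (fun k _ => Hk k)) _.
have HFE k : prb P (F k) = prb P (E k).
  by rewrite /prb /F /E zip_mapl cyl_shift.
under eq_bigr => k _ do rewrite HFE.
apply: (@le_trans _ _ (\sum_(k < #|{: T}|) prb P (E k) * (Bmax + D P X G))).
  apply: ler_sum => k _; apply: ler_wpM2l; first exact: prb_ge0.
  by rewrite lerD2r HB.
rewrite -mulr_suml -prb_bigU // ler_piMl //.
  by apply: addr_ge0 => //; exact: D_ge0.
by apply: prb_le1; apply: bigsetU_measurable => k _.
Qed.

End Coll.


Fixpoint ptsN (g K : nat) : seq nat :=
  if K is K'.+1 then (1 + K' * g)%N :: ptsN g K' else [::].

Lemma ptsN_mem g K x : x \in ptsN g K -> exists2 k, (k < K)%N & x = (1 + k * g)%N.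
Proof.
elim: K => [|K IH] //=; rewrite in_cons => /orP[/eqP->|/IH[k kK ->]].
  by exists K.
by exists k => //; apply: ltn_trans kK _.
Qed.

Lemma size_ptsN g K : size (ptsN g K) = K.
Proof. by elim: K => //= K ->. Qed.

Lemma sparse_pts g K : sparseI g [seq Posz x | x <- ptsN g K].
Proof.
elim: K => [|K IH] //=; rewrite IH andbT; apply/allP => z /mapP [x /ptsN_mem [k kK ->] ->].
rewrite -PoszD lez_nat -addnA leq_add2l -mulSnr leq_mul2r.
by rewrite kK orbT.
Qed.

Section Match.
Variables (R : realType) (d : measure_display) (Omega : measurableType d)
  (P : probability Omega R) (A : finType) (X : int -> Omega -> A).
Hypothesis Xm : process_measurable X.
Hypothesis Xst : stationary P X.
Hypothesis Hsum : ((\sum_(0 <= s <oo) mixing_coef P X s) < +oo)%E.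
Variable p0 : R.
Hypothesis Hp0 : forall a, prb P (X 1 @^-1` [set a]) <= p0.

Lemma Mset_meas I r : measurable (Mset X I r).
Proof.
elim: I => [|j I IH].
  by have -> : Mset X [::] r = setT by apply/seteqP; split => w.
have -> : Mset X (j :: I) r = [set w | X j w = X (j + r) w] `&` Mset X I r.
  apply/seteqP; split => w /=.
    by move=> H; split; [apply: H; rewrite mem_head|move=> j' Hj'; apply: H; rewrite in_cons Hj' orbT].
  by case=> H1 H2 j'; rewrite in_cons => /orP[/eqP->|/H2].
by apply: measurableI => //; exact: meas_eq.
Qed.

Definition Mt (s t : nat) := [set w | forall i : nat, (1 <= i <= t)%N -> X i%:Z w = X (i + s)%:Z w].

Lemma Mt_meas s t : measurable (Mt s t).
Proof.
have -> : Mt s t = \bigcap_i (if (1 <= i <= t)%N then [set w | X i%:Z w = X (i + s)%:Z w] else setT).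
  apply/seteqP; split => w /=.
    by move=> H i _; case: ifP => // Hi; apply: H.
  by move=> H i Hi; have := H i I; rewrite Hi.
apply: bigcapT_measurable => k; case: ifP => _ //; exact: meas_eq.
Qed.

Lemma periodic s t w : Mt s t w -> forall k i, (1 <= i)%N -> (i + k * s <= t)%N ->
  X i%:Z w = X (i + k.+1 * s)%:Z w.
Proof.
move=> Hw; elim=> [|k IH] i i1 Hk.
  by rewrite mul1n; apply: Hw; rewrite i1 /=; rewrite mul0n addn0 in Hk.
rewrite IH //; last by apply: leq_trans Hk; rewrite leq_add2l leq_mul2r leqnSn orbT.
have -> : (i + k.+2 * s = (i + k.+1 * s) + s)%N by rewrite [(k.+2 * s)%N]mulSn; lia.
apply: Hw; apply/andP; split; first by lia.
by apply: leq_trans Hk; rewrite mulSn; lia.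
Qed.

Lemma match_bound g s t : (1 <= g)%N -> (1 <= s)%N ->
  match_prob P X s t <= (p0 + D P X g) ^+ ((t %/ 3) %/ g) + D P X (t %/ 3).
Proof.
move=> g1 s1.
set m := (t %/ 3)%N; set K := (m %/ g)%N; set k0 := ((2 * m) %/ s)%N.
set r := (k0.+1 * s)%N.
have Hr : (2 * m < r)%N by apply: ltn_ceil.
have Hk0 : (k0 * s <= 2 * m)%N by apply: leq_trunc_div.
have Hm : (m * 3 <= t)%N by apply: leq_trunc_div.
have HK : (K * g <= m)%N by apply: leq_trunc_div.
have Hq0 : 0 <= p0 + D P X g.
  apply: addr_ge0; last exact: D_ge0.
  exact: le_trans (prb_ge0 P _) (Hp0 (X 1 (point : Omega))).
have HI : forall j, j \in [seq Posz x | x <- ptsN g K] ->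
    j <= m%:Z /\ m%:Z + m%:Z <= j + r%:Z.
  move=> j /mapP [x /ptsN_mem [k kK ->] ->]; rewrite -!PoszD !lez_nat; split.
    apply: leq_trans HK; apply: leq_trans (_ : (k.+1 * g <= K * g)%N); last by rewrite leq_mul2r kK orbT.
    by rewrite mulSn; lia.
  by lia.
have HB : forall a : seq A, size a = size [seq Posz x | x <- ptsN g K] ->
    prb P (cyl X (zip [seq Posz x | x <- ptsN g K] a)) <= (p0 + D P X g) ^+ K.
  move=> a Ha; have := points Xm Xst Hsum Hp0 (sparse_pts g K) Ha.
  by rewrite size_map size_ptsN.
have := collision Xm Xst Hsum HI HB (exprn_ge0 _ Hq0) (Mset_meas _ _).
apply: le_trans; rewrite /match_prob.
apply: prb_le; [exact: Mt_meas|exact: Mset_meas|].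
move=> w Hw j /mapP [x /ptsN_mem [k kK ->] ->].
have := periodic Hw (k := k0) (i := (1 + k * g)%N) _ _.
rewrite -PoszD => -> //.
have : (k * g < K * g)%N by rewrite ltn_mul2r kK andbT; lia.
lia.
Qed.

End Match.


Lemma tail_lemma (R : realType) (u : nat -> R) (B : R) :
  (forall k, 0 <= u k) -> (forall a b, (a <= b)%N -> u b <= u a) ->
  (forall n, \sum_(0 <= k < n) u k <= B) ->
  forall e, 0 < e -> exists N, forall m, (N <= m)%N -> m%:R * u m <= e.
Proof.
move=> u0 umono uB e e0.
pose S n := \sum_(0 <= k < n) u k.
have Smono a b : (a <= b)%N -> S a <= S b.
  move=> ab; rewrite /S (big_cat_nat (leq0n a) ab) /= lerDl.
  by apply: sumr_ge0 => k _.
have hs : has_sup (range S).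
  split; first by exists (S 0), 0.
  by exists B => x [n _ <-]; exact: uB.
have e3 : 0 < e / 3 by rewrite divr_gt0.
have [x [N _ <-] HN] := sup_adherent e3 hs.
exists (2 * N.+1)%N => m Hm.
pose j := (m./2)%N.
have j1 : (N.+1 <= j)%N by rewrite /j; lia.
have Hmj : (m <= 2 * j + 1)%N by rewrite /j; lia.
have Hm2 : (2 * j <= m)%N by rewrite /j; lia.
have Hdiff : j%:R * u (2 * j)%N <= S (2 * j + 1)%N - S j.+1.
  rewrite /S (big_cat_nat (leq0n j.+1) (_ : (j.+1 <= 2 * j + 1)%N)) /=; last by lia.
  rewrite addrC addrK.
  apply: le_trans (_ : \sum_(j.+1 <= k < 2 * j + 1) u (2 * j)%N <= _).
    rewrite sumr_const_nat; have -> : (2 * j + 1 - j.+1 = j)%N by lia.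
    by rewrite mulr_natl.
  by apply: ler_sum_nat => k /andP[_ Hk]; apply: umono; lia.
have H1 : S (2 * j + 1)%N <= sup (range S) by apply: sup_upper_bound => //; exists (2 * j + 1)%N.
have H2 : S N <= S j.+1 by apply: Smono; lia.
have Hu : u m <= u (2 * j)%N by apply: umono.
have Hj : m%:R <= 3 * j%:R :> R.
  by rewrite -natrM ler_nat; lia.
apply: le_trans (_ : 3 * (j%:R * u (2 * j)%N) <= _).
  by rewrite mulrA; apply: ler_pM => //.
lra.
Qed.

Lemma geom_sum_bound (R : realType) (q : R) n : 0 <= q < 1 ->
  \sum_(0 <= k < n) q ^+ k <= (1 - q)^-1.
Proof.
case/andP=> q0 q1.
have Hq : 0 < 1 - q by lra.
have E : (1 - q) * \sum_(0 <= k < n) q ^+ k = 1 - q ^+ n.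
  elim: n => [|n IH]; first by rewrite big_geq // mulr0 expr0 subrr.
  by rewrite big_nat_recr //= mulrDr IH exprS; ring.
rewrite -(ler_pM2l Hq) E mulfV ?gt_eqF // gerBl.
exact: exprn_ge0.
Qed.

Lemma geom_tail (R : realType) (q : R) : 0 <= q < 1 ->
  forall e, 0 < e -> exists N, forall m, (N <= m)%N -> m%:R * q ^+ m <= e.
Proof.
move=> /[dup] Hq /andP[q0 q1]; apply: (@tail_lemma _ _ ((1 - q)^-1)).
- by move=> k; apply: exprn_ge0.
- by move=> a b ab; apply: ler_wiXn2l => //; lra.
- by move=> n; exact: geom_sum_bound.
Qed.


Section Final.
Variables (R : realType) (d : measure_display) (Omega : measurableType d)
  (P : probability Omega R) (A : finType) (X : int -> Omega -> A).
Hypothesis Xm : process_measurable X.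
Hypothesis Xst : stationary P X.
Hypothesis Hsum : ((\sum_(0 <= s <oo) mixing_coef P X s) < +oo)%E.

Lemma Sbound n : \sum_(0 <= k < n) D P X k <= fine (\sum_(0 <= s <oo) mixing_coef P X s).
Proof.
have h0 : (0 <= \sum_(0 <= s <oo) mixing_coef P X s)%E.
  have H := (@nneseries_lim_ge _ _ xpredT 0 0 (fun k _ _ => mix_ge0 P X k)).
  by rewrite big_geq in H.
rewrite -lee_fin fineK; last by rewrite ge0_fin_numE.
rewrite -sumEFin.
have -> : (\sum_(0 <= i < n) (D P X i)%:E = \sum_(0 <= i < n) mixing_coef P X i)%E.
  by apply: eq_bigr => k _; rewrite (mixE Hsum).
exact: (@nneseries_lim_ge _ _ xpredT 0 n (fun k _ _ => mix_ge0 P X k)).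
Qed.

Lemma prb_setC F : measurable F -> prb P (~` F) = 1 - prb P F.
Proof.
move=> mF; apply: EFin_inj; rewrite -prbE; last exact: measurableC.
by rewrite probability_setC // prbE.
Qed.

Lemma prb_DI E F : measurable E -> measurable F ->
  prb P E = prb P (E `\` F) + prb P (E `&` F).
Proof.
move=> mE mF; apply: EFin_inj.
have mD : measurable (E `\` F) by exact: measurableD.
have mI : measurable (E `&` F) by exact: measurableI.
rewrite EFinD -(@prbE _ _ _ P _ mE) -(@prbE _ _ _ P _ mD) -(@prbE _ _ _ P _ mI).
exact: measureDI.
Qed.

Hypothesis HR : (recurrence_R P X < 1%E)%E.

Lemma point_lt1 a : prb P (X 1 @^-1` [set a]) < 1.
Proof.
rewrite ltNge; apply/negP => Ha.
set E := X 1 @^-1` [set a]; set F := X (1 + 1%:Z) @^-1` [set a].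
have E1 : prb P E = 1 by apply/eqP; rewrite eq_le prb_le1 ?Ha //; exact: Xm.
have F1 : prb P F = 1 by rewrite /F (prb_point Xst) -/E E1.
have mE : measurable E by exact: Xm.
have mF : measurable F by exact: Xm.
have HD : prb P (E `\` F) <= 0.
  apply: le_trans (_ : prb P (~` F) <= _).
    apply: prb_le; [exact: measurableD|exact: measurableC|by move=> w []].
  by rewrite prb_setC // F1 subrr.
have EF1 : 1 <= prb P (E `&` F).
  have H := prb_DI mE mF; rewrite E1 in H; lra.
have Heq : 1 <= prb P [set w | X 1 w = X (1 + 1%:Z) w].
  apply: le_trans EF1 _; apply: prb_le; [exact: measurableI|exact: meas_eq|].
  by move=> w [/= -> ->].
have : ((prb P [set w | X 1 w = X (1 + 1%:Z) w])%:E <= recurrence_R P X)%E.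
  by apply: ereal_sup_ubound; exists 1%N.
move=> H; have := lt_le_trans HR (le_trans _ H).
by rewrite lee_fin Heq ltxx => /(_ isT).
Qed.

Lemma p0_exists : exists p0 : R, [/\ 0 <= p0, p0 < 1 & forall a, prb P (X 1 @^-1` [set a]) <= p0].
Proof.
exists (\big[Order.max/0]_(a : A) prb P (X 1 @^-1` [set a])); split.
- elim/big_ind: _ => // [x y Hx Hy|a _]; [by rewrite le_max Hx|exact: prb_ge0].
- by elim/big_ind: _ => // [x y Hx Hy|a _]; [rewrite gt_max Hx Hy|exact: point_lt1].
- by move=> a; apply: le_bigmax.
Qed.

End Final.


Lemma arith_key (R : realType) (tR mR KR gR qK Dm delta : R) :
  tR <= 3 * mR + 3 -> mR + 1 <= gR * (KR + 1) -> 1 <= KR -> 1 <= mR -> 1 <= gR ->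
  0 <= qK -> 0 <= Dm -> qK * KR <= delta -> mR * Dm <= delta ->
  (qK + Dm) * tR <= 6 * (gR + 1) * delta.
Proof.
move=> ht hm hK hm1 hg hq hD h1 h2.
have A1 : qK * tR <= qK * (3 * mR + 3) by apply: ler_wpM2l.
have A2 : qK * (3 * mR + 3) <= qK * (3 * (gR * (KR + 1))) by apply: ler_wpM2l => //; lra.
have A3 : qK * (3 * (gR * (KR + 1))) <= 6 * gR * (qK * KR).
  have : qK * gR <= qK * gR * KR by rewrite ler_peMr //; apply: mulr_ge0 => //; lra.
  move=> H; rewrite -[_ * (qK * KR)]mulrA; nra.
have A4 : Dm * tR <= Dm * (3 * mR + 3) by apply: ler_wpM2l.
have A5 : Dm * (3 * mR + 3) <= 6 * (mR * Dm) by nra.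
have A6 : 6 * gR * (qK * KR) <= 6 * gR * delta by apply: ler_wpM2l => //; lra.
nra.
Qed.

Lemma nat_t3 t m : (t < m.+1 * 3)%N -> (t <= 3 * m + 2)%N.
Proof. lia. Qed.
Lemma nat_t3' t m : (t <= 3 * m + 2)%N -> (t <= 3 * m + 3)%N.
Proof. lia. Qed.

Unset Implicit Arguments.
Theorem mainTheorem10 (R : realType) (d : measure_display)
  (Omega : measurableType d) (P : probability Omega R) (A : finType)
  (X : int -> Omega -> A) (h beta eta : R) :
  process_measurable X ->
  stationary P X ->
  (mixing_coef P X @ \oo --> 0%E) ->
  ((\sum_(0 <= s <oo) mixing_coef P X s) < +oo)%E ->
  ((fun t : nat => block_entropy P X t / (2 * t + 1)%:R : R) @ \oo --> h) ->
  0 < h ->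
  (recurrence_R P X < 1%E)%E ->
  0 < beta -> 0 < eta ->
  (fun n : nat => max_match_prob P X h beta eta n * @logA R A n%:R : R) @ \oo --> (0 : R).
Proof.
move=> Xm Xst _ Hsum _ h0 HR b0 eta0.
have [p0 [p00 p01 Hp0]] := p0_exists Xm Xst HR.
have Dmono : forall a b, (a <= b)%N -> D P X b <= D P X a.
  by move=> a b ab; exact: (D_mono Hsum ab).
have e1 : 0 < (1 - p0) / 2 by lra.
have [Ng HNg] := tail_lemma (D_ge0 Hsum) Dmono (Sbound Hsum) e1.
set g := Ng.+1.
have Dg : D P X g <= (1 - p0) / 2.
  apply: le_trans (HNg g (leqnSn _)); rewrite ler_peMl ?D_ge0 //.
  by rewrite ler1n.
set q := p0 + D P X g.
have q01 : 0 <= q < 1 by apply/andP; split; have := D_ge0 Hsum g; rewrite /q; lra.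
set c := (1 + eta) / h.
have c0 : 0 < c by rewrite /c divr_gt0 //; lra.
apply/cvgrPdist_le => e e0.
have Anz : (0 < #|A|)%N by apply/card_gt0P; exists (X 1 point).
case: (leqP #|A| 1) => HA.
  have A1 : #|A| = 1%N by apply/eqP; rewrite eqn_leq HA Anz.
  near=> n; rewrite /logA A1 ln1 invr0 !mulr0 subr0 normr0; exact: ltW.
have e20 : 0 < e / 2 by lra.
set delta := e / 2 * c / (6 * (g%:R + 1)).
have g0 : 0 <= g%:R :> R by exact: ler0n.
have g6 : 0 < 6 * (g%:R + 1) :> R by lra.
have delta0 : 0 < delta by apply: divr_gt0 => //; apply: mulr_gt0.
have [N1 HN1] := tail_lemma (D_ge0 Hsum) Dmono (Sbound Hsum) delta0.
have [N2 HN2] := geom_tail q01 delta0.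
set M := (maxn N1 N2).+1.
set T0 := (3 * (g * M))%N.
have lnA : 0 < ln (#|A|%:R : R) by apply: ln_gt0; rewrite ltr1n.
have key : forall (L : R), 0 < L -> T0%:R / c <= L -> forall s t : nat, (1 <= s)%N ->
    c * L <= t%:R -> match_prob P X s t * L <= e / 2.
  move=> L L0 HL s t s1 ht.
  have tT : (T0 <= t)%N.
    rewrite -(ler_nat R); apply: le_trans ht; move: HL; by rewrite ler_pdivrMr // mulrC.
  set m := (t %/ 3)%N; set K := (m %/ g)%N.
  have mM : (g * M <= m)%N.
    by have := leq_div2r 3 tT; rewrite /T0 mulKn.
  have KM : (M <= K)%N.
    by have := leq_div2r g mM; rewrite mulKn.
  have Hb := match_bound Xm Xst Hsum Hp0 t (ltn0Sn Ng) s1.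
  have t3 : (t <= 3 * m + 2)%N by exact: (nat_t3 (ltn_ceil t (isT : (0 < 3)%N))).
  have mg : (m.+1 <= K.+1 * g)%N.
    rewrite /K /g; apply: ltn_ceil; exact: ltn0Sn.
  have K1 : (1 <= K)%N by apply: leq_trans KM.
  have gMM : (M <= g * M)%N by apply: leq_pmull.
  have m1 : (1 <= m)%N by apply: leq_trans mM; apply: leq_trans gMM.
  have HK : K%:R * q ^+ K <= delta by apply: HN2; apply: leq_trans KM; apply: leq_trans (leq_maxr N1 N2) _.
  have Hm : m%:R * D P X m <= delta.
    by apply: HN1; apply: leq_trans mM; apply: leq_trans gMM; apply: leq_trans (leq_maxl N1 N2) _.
  have Ha := @arith_key R t%:R m%:R K%:R g%:R (q ^+ K) (D P X m) delta.
  have Hc : (q ^+ K + D P X m) * t%:R <= e / 2 * c.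
    have -> : e / 2 * c = 6 * (g%:R + 1) * delta.
      by rewrite /delta [RHS]mulrC divfK // gt_eqF.
    apply: Ha.
    - have -> : 3 * m%:R + 3 = (3 * m + 3)%:R :> R by rewrite natrD natrM.
      by rewrite ler_nat; apply: nat_t3'.
    - have -> : m%:R + 1 = (m.+1)%:R :> R by rewrite natr1.
      have -> : g%:R * (K%:R + 1) = (K.+1 * g)%:R :> R by rewrite natrM natr1 mulrC.
      by rewrite ler_nat; exact: mg.
    - by rewrite ler1n.
    - by rewrite ler1n.
    - by rewrite ler1n.
    - by apply: exprn_ge0; case/andP: q01.
    - exact: D_ge0.
    - by rewrite mulrC.
    - exact: Hm.
  have HLt : L <= t%:R / c by rewrite ler_pdivlMr // mulrC.
  apply: le_trans (_ : (q ^+ K + D P X m) * (t%:R / c) <= _).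
    apply: ler_pM => //; [exact: prb_ge0|exact: ltW].
  by rewrite mulrA ler_pdivrMr.
near=> n.
have Ln : T0%:R / c <= @logA R A n%:R.
  rewrite /logA ler_pdivlMr //.
  have Hn : expR (T0%:R / c * ln (#|A|%:R : R)) <= n%:R by near: n; apply: nbhs_infty_ger.
  have n0 : 0 < (n%:R : R) by apply: lt_le_trans Hn; exact: expR_gt0.
  by rewrite -ler_ln ?posrE ?expR_gt0 // expRK in Hn.
have T0c : 0 < T0%:R / c by rewrite divr_gt0 // ltr0n /T0 muln_gt0 muln_gt0.
have L0 : 0 < @logA R A n%:R by apply: lt_le_trans Ln.
set L := @logA R A n%:R.
rewrite /max_match_prob; set S := (Y in sup Y).
have hs : has_sup S.
  split; first by exists 0; left.
  exists 1 => v [-> //|[s [t [_ _ _ _ ->]]]].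
  exact: (prb_le1 P (Mt_meas Xm s t)).
have mm0 : 0 <= sup S.
  by apply: sup_upper_bound => //; left.
have mmle : sup S <= e / 2 / L.
  apply: ge_sup; first by exists 0; left.
  move=> v [-> |[s [t [s1 _ ht _ ->]]]]; first by rewrite divr_ge0 // ltW.
  by rewrite ler_pdivlMr //; apply: key.
rewrite sub0r normrN ger0_norm; last by apply: mulr_ge0 => //; exact: ltW.
have : sup S * L <= e / 2 by rewrite -ler_pdivlMr.
lra.
Unshelve. all: end_near.
Qed.
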